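(* Let $n\ge1$ and let $\Lambda$ be a normal congruence on $E_n$. Then there is $k\in\{1,\dots,n\}$ such that $\Lambda=\iota_{E_n}\cup(E_n^{(k)}\times E_n^{(k)})$.
   Context: Let $X=\{1,\dots,n\}$, $X'=\{1',\dots,n'\}$. $\mathcal{I}^{\ast}_n$ is the set of partitions of $X\cup X'$ all of whose blocks meet both $X$ and $X'$, with product: regard $\alpha$ as a partition of $X\cup X''$ and $\beta$ as a partition of $X''\cup X'$ ($X''$ a third copy of $X$), and let $\alpha\beta$ be the partition of $X\cup X'$ induced by the equivalence on $X\cup X''\cup X'$ generated by the blocks of both; it is an inverse semigroup. $E_n$ is its set of idempotents (the elements all of whose blocks have the form $E\cup E'$); rank = number of blocks; $E_n^{(k)}=\{e\in E_n:\mathrm{rank}(e)\le k\}$; $\iota_{E_n}$ is the identity relation on $E_n$. A congruence $\Lambda$ on the semilattice $E_n$ is normal if $e\Lambda f$ implies $s^{-1}es\,\Lambda\,s^{-1}fs$ for all $s\in\mathcal{I}^{\ast}_n$. *)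

(* Defs.v *)
From mathcomp Require Import all_boot.
Set Implicit Arguments. Unset Strict Implicit. Unset Printing Implicit Defensive.

Section Dual.
Variable n : nat.

(* X u X' : inl i = i in X, inr i = i' in X'. *)
Definition pt := ('I_n + 'I_n)%type.
Definition bp := {set {set pt}}.

Definition in_Istar (a : bp) : Prop :=
  partition a [set: pt] /\
  (forall B, B \in a -> (exists i, inl i \in B) /\ (exists j, inr j \in B)).

(* three copies: inl (inl i) = X, inl (inr i) = X'', inr i = X' *)
Definition upt := (('I_n + 'I_n) + 'I_n)%type.
Definition emb_l (x : pt) : upt :=
  match x with inl i => inl (inl i) | inr i => inl (inr i) end.
Definition emb_r (x : pt) : upt :=
  match x with inl i => inl (inr i) | inr i => inr i end.
Definition emb_o (x : pt) : upt :=
  match x with inl i => inl (inl i) | inr i => inr i end.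

Definition prod_edge (a b : bp) : rel upt := fun u v =>
  [exists B in a, exists x in B, exists y in B, (emb_l x == u) && (emb_l y == v)]
  || [exists B in b, exists x in B, exists y in B, (emb_r x == u) && (emb_r y == v)].

(* the product alpha beta: partition of X u X' induced by the equivalence
   generated by the blocks of alpha and beta *)
Definition bpmul (a b : bp) : bp :=
  [set [set t : pt | connect (prod_edge a b) (emb_o s) (emb_o t)] | s : pt].

Definition in_E (e : bp) : Prop := in_Istar e /\ bpmul e e = e.

Definition rank (a : bp) : nat := #|a|.

(* t is an inverse of s (in the inverse semigroup I*_n it is unique: s^{-1}) *)
Definition is_inverse (s t : bp) : Prop :=
  in_Istar t /\ bpmul (bpmul s t) s = s /\ bpmul (bpmul t s) t = t.

Definition E_congruence (L : bp -> bp -> Prop) : Prop :=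
  (forall e f, L e f -> in_E e /\ in_E f) /\
  (forall e, in_E e -> L e e) /\
  (forall e f, L e f -> L f e) /\
  (forall e f g, L e f -> L f g -> L e g) /\
  (forall e f g, L e f -> in_E g -> L (bpmul e g) (bpmul f g) /\ L (bpmul g e) (bpmul g f)).

Definition normal_congruence (L : bp -> bp -> Prop) : Prop :=
  E_congruence L /\
  forall s t e f, in_Istar s -> is_inverse s t -> L e f ->
    L (bpmul (bpmul t e) s) (bpmul (bpmul t f) s).

End Dual.

(* Main.v *)
Require Import Defs.
From mathcomp Require Import all_boot.
From mathcomp Require Import zify.
From Stdlib Require Import Classical.
Set Implicit Arguments. Unset Strict Implicit. Unset Printing Implicit Defensive.

Definition lab2 {n} (a b : 'I_n -> nat) (x : pt n) : nat :=
  match x with inl i => a i | inr i => b i end.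
Definition Lab {n} (l : pt n -> nat) : bp n := [set [set t | l s == l t] | s : pt n].
Definition Lab2 {n} (a b : 'I_n -> nat) : bp n := Lab (lab2 a b).
Definition img {n} (a b : 'I_n -> nat) := forall i, exists j, a i = b j.

Lemma Lab_ext n (l l' : pt n -> nat) :
  (forall s t, (l s == l t) = (l' s == l' t)) -> Lab l = Lab l'.
Proof.
move=> H; rewrite /Lab; apply: eq_imset => s; apply/setP => t; by rewrite !inE H.
Qed.

Lemma Lab2_ext n (a b a' b' : 'I_n -> nat) :
  (forall i, a i = a' i) -> (forall i, b i = b' i) -> Lab2 a b = Lab2 a' b'.
Proof.
move=> Ha Hb; apply: Lab_ext => s t.
by case: s => i; case: t => j /=; rewrite ?Ha ?Hb.
Qed.

Lemma edgeL n (l1 l2 : pt n -> nat) x y : l1 x = l1 y ->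
  prod_edge (Lab l1) (Lab l2) (emb_l x) (emb_l y).
Proof.
move=> H; apply/orP; left; apply/existsP; exists [set t | l1 x == l1 t].
rewrite imset_f //=; apply/existsP; exists x; rewrite inE eqxx /=.
by apply/existsP; exists y; rewrite inE H !eqxx.
Qed.

Lemma edgeR n (l1 l2 : pt n -> nat) x y : l2 x = l2 y ->
  prod_edge (Lab l1) (Lab l2) (emb_r x) (emb_r y).
Proof.
move=> H; apply/orP; right; apply/existsP; exists [set t | l2 x == l2 t].
rewrite imset_f //=; apply/existsP; exists x; rewrite inE eqxx /=.
by apply/existsP; exists y; rewrite inE H !eqxx.
Qed.

Lemma edge_inv n (l1 l2 : pt n -> nat) u v :
  prod_edge (Lab l1) (Lab l2) u v ->
  (exists x y, l1 x = l1 y /\ u = emb_l x /\ v = emb_l y) \/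
  (exists x y, l2 x = l2 y /\ u = emb_r x /\ v = emb_r y).
Proof.
case/orP => /existsP [B /andP [/imsetP [s _ ->]
   /existsP [x /andP [Hx /existsP [y /andP [Hy /andP [/eqP <- /eqP <-]]]]]]];
 rewrite !inE in Hx Hy; [left|right]; exists x, y;
 by rewrite -(eqP Hx) -(eqP Hy).
Qed.

Lemma connect_inv (T : finType) (e : rel T) (f : T -> nat) :
  (forall u v, e u v -> f u = f v) -> forall u v, connect e u v -> f u = f v.
Proof.
move=> H u v /connectP [p]; elim: p u => [|w p IH] u /=; first by move=> _ ->.
by case/andP => /H -> /IH.
Qed.

Definition mid {n} (j : 'I_n) : upt n := inl (inr j).

Lemma bpmul_Lab2 n (a b c d : 'I_n -> nat) (g1 g2 : nat -> nat) :
  (forall j, g1 (b j) = g2 (c j)) -> img a b -> img d c ->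
  (forall j j', g1 (b j) = g1 (b j') ->
     connect (prod_edge (Lab2 a b) (Lab2 c d)) (mid j) (mid j')) ->
  bpmul (Lab2 a b) (Lab2 c d) = Lab2 (fun i => g1 (a i)) (fun i => g2 (d i)).
Proof.
move=> Hbc Ha Hd Hmid.
pose E := prod_edge (Lab2 a b) (Lab2 c d).
pose chi (u : upt n) : nat := match u with
  | inl (inl i) => g1 (a i) | inl (inr j) => g1 (b j) | inr k => g2 (d k) end.
have Hinv : forall u v, connect E u v -> chi u = chi v.
  apply: connect_inv => u v /edge_inv [[x [y [Hxy [-> ->]]]]|[x [y [Hxy [-> ->]]]]].
    by case: x Hxy => i; case: y => j /= ->.
  by case: x Hxy => i; case: y => j /= Hxy; rewrite ?Hbc Hxy.
have Hto : forall u, exists j, chi u = g1 (b j) /\ connect E u (mid j) /\ connect E (mid j) u.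
  case=> [[i|j]|k].
  - have [j Hj] := Ha i; exists j; rewrite /= Hj; split=> //.
    by split; apply: connect1; [apply: (@edgeL _ _ _ (inl i) (inr j)) | apply: (@edgeL _ _ _ (inr j) (inl i))]; rewrite /= Hj.
  - by exists j; split=> //; split; apply: connect0.
  - have [j Hj] := Hd k; exists j; rewrite /= Hj Hbc; split=> //.
    by split; apply: connect1; [apply: (@edgeR _ _ _ (inr k) (inl j)) | apply: (@edgeR _ _ _ (inl j) (inr k))]; rewrite /= Hj.
rewrite /bpmul /Lab2 /Lab; apply: eq_imset => s; apply/setP => t; rewrite !inE.
have -> : lab2 (fun i => g1 (a i)) (fun i => g2 (d i)) s = chi (emb_o s) by case: s.
have -> : lab2 (fun i => g1 (a i)) (fun i => g2 (d i)) t = chi (emb_o t) by case: t.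
apply/idP/eqP; first exact: Hinv.
move=> Hst.
have [j1 [H1 [C1 _]]] := Hto (emb_o s).
have [j2 [H2 [_ C2]]] := Hto (emb_o t).
apply: connect_trans C1 _; apply: connect_trans _ C2; apply: Hmid.
by rewrite -H1 -H2.
Qed.

Lemma mul_same n (a b d : 'I_n -> nat) : img a b -> img d b ->
  bpmul (Lab2 a b) (Lab2 b d) = Lab2 a d.
Proof.
move=> Ha Hd; rewrite (@bpmul_Lab2 _ a b b d id id) //.
by move=> j j' H; apply: connect1; apply: (@edgeL _ _ _ (inr j) (inr j')).
Qed.

Lemma mul_coarseL n (a b c d : 'I_n -> nat) (g : nat -> nat) :
  (forall j, b j = g (c j)) -> img a b -> img d c ->
  bpmul (Lab2 a b) (Lab2 c d) = Lab2 a (fun i => g (d i)).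
Proof.
move=> Hb Ha Hd; rewrite (@bpmul_Lab2 _ a b c d id g) //.
by move=> j j' H; apply: connect1; apply: (@edgeL _ _ _ (inr j) (inr j')).
Qed.

Lemma mul_coarseR n (a b c d : 'I_n -> nat) (g : nat -> nat) :
  (forall j, c j = g (b j)) -> img a b -> img d c ->
  bpmul (Lab2 a b) (Lab2 c d) = Lab2 (fun i => g (a i)) d.
Proof.
move=> Hc Ha Hd; rewrite (@bpmul_Lab2 _ a b c d g id) //.
move=> j j' H; apply: connect1; apply: (@edgeR _ _ _ (inl j) (inl j')).
by rewrite /= !Hc.
Qed.

Lemma img_refl n (a : 'I_n -> nat) : img a a.
Proof. by move=> i; exists i. Qed.

Lemma Istar_Lab2 n (a b : 'I_n -> nat) : img a b -> img b a -> in_Istar (Lab2 a b).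
Proof.
move=> Hab Hba; split.
  apply/and3P; split.
  - apply/eqP/setP => x; rewrite inE; apply/bigcupP.
    by exists [set t | lab2 a b x == lab2 a b t]; rewrite ?imset_f // inE.
  - apply/trivIsetP => A B /imsetP [s _ ->] /imsetP [s' _ ->] Hne.
    rewrite -setI_eq0; apply/eqP/setP => t; rewrite !inE.
    apply/negbTE/negP => /andP [/eqP H1 /eqP H2]; move/eqP: Hne; apply.
    by apply/setP => u; rewrite !inE H1 H2.
  - apply/negP => /imsetP [s _ H].
    have: s \in set0 by rewrite H inE.
    by rewrite inE.
move=> B /imsetP [s _ ->]; case: s => [i|j].
- have [j Hj] := Hab i.
  by split; [exists i| exists j]; rewrite inE /= ?Hj.
- have [i Hi] := Hba j.
  by split; [exists i| exists j]; rewrite inE /= ?Hi.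
Qed.

Lemma inE_Lab2 n (a : 'I_n -> nat) : in_E (Lab2 a a).
Proof.
split; first by apply: Istar_Lab2; apply: img_refl.
by rewrite mul_same //; apply: img_refl.
Qed.

Lemma inverse_Lab2 n (A B : 'I_n -> nat) : img A B -> img B A ->
  is_inverse (Lab2 A B) (Lab2 B A).
Proof.
move=> HAB HBA; split; first exact: Istar_Lab2.
split.
  by rewrite mul_same // mul_same //; apply: img_refl.
by rewrite mul_same // mul_same //; apply: img_refl.
Qed.

Definition unw {n} (x : pt n) : 'I_n := match x with inl i => i | inr i => i end.

Lemma E_char n (e : bp n) : in_E e -> exists psi : 'I_n -> nat,
  e = Lab2 psi psi /\ (forall i, psi i < #|e|) /\
  (forall v, v < #|e| -> exists i, psi i = v) /\ #|e| <= n.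
Proof.
case=> [[Hpart Hmeet] Hid].
case/and3P: Hpart => /eqP Hcov Htriv Hnot0.
have Hcv x : x \in cover e by rewrite Hcov inE.
have Hin x : pblock e x \in e by apply: pblock_mem.
have Hmem x : x \in pblock e x by rewrite mem_pblock.
have Hsym i : pblock e (inl i) = pblock e (inr i).
  have [[a Ha] _] := Hmeet _ (Hin (inr i)).
  have [_ [b Hb]] := Hmeet _ (Hin (inl i)).
  pose K := [set t | connect (prod_edge e e) (emb_o (inl a)) (emb_o t)].
  have HK : K \in e.
    have -> : (K \in e) = (K \in bpmul e e) by rewrite Hid.
    exact: imset_f.
  have Hpath : connect (prod_edge e e) (emb_o (inl a)) (emb_o (inr b)).
    apply: (@connect_trans _ _ (inl (inr i))); apply: connect1; apply/orP.
      left; apply/existsP; exists (pblock e (inr i)); rewrite Hin /=.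
      apply/existsP; exists (inl a); rewrite Ha /=.
      by apply/existsP; exists (inr i); rewrite Hmem /= !eqxx.
    right; apply/existsP; exists (pblock e (inl i)); rewrite Hin /=.
    apply/existsP; exists (inl i); rewrite Hmem /=.
    by apply/existsP; exists (inr b); rewrite Hb /= !eqxx.
  have E1 : pblock e (inl a) = K by apply: def_pblock => //; rewrite inE connect0.
  have E2 : pblock e (inl a) = pblock e (inr i) by apply: def_pblock.
  have E3 : pblock e (inr b) = K by apply: def_pblock => //; rewrite inE.
  have E4 : pblock e (inr b) = pblock e (inl i) by apply: def_pblock.
  by rewrite -E4 E3 -E1 E2.
have Hunw x : pblock e x = pblock e (inl (unw x)) by case: x => // i; rewrite Hsym.
pose psi i := index (pblock e (inl i)) (enum e).
have Hnth i : nth set0 (enum e) (psi i) = pblock e (inl i) by rewrite nth_index // mem_enum.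
have Hpsi i j : (psi i == psi j) = (pblock e (inl i) == pblock e (inl j)).
  apply/eqP/eqP => [H|]; last by rewrite /psi => ->.
  by rewrite -Hnth H Hnth.
have Hlab x : lab2 psi psi x = psi (unw x) by case: x.
have Hpe x y : (lab2 psi psi x == lab2 psi psi y) = (y \in pblock e x).
  by rewrite !Hlab Hpsi -!Hunw eq_pblock.
exists psi; split.
  apply/setP => B; apply/idP/imsetP.
    move=> HB; have [[i Hi] _] := Hmeet B HB.
    exists (inl i) => //; apply/setP => y; by rewrite inE Hpe (def_pblock Htriv HB Hi).
  case=> x _ ->.
  have -> : [set t | lab2 psi psi x == lab2 psi psi t] = pblock e x.
    by apply/setP => y; rewrite inE Hpe.
  exact: Hin.
split; first by move=> i; rewrite cardE index_mem mem_enum.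
split.
  move=> v Hv; have Hv' : v < size (enum e) by rewrite -cardE.
  have HB : nth set0 (enum e) v \in e by rewrite -mem_enum mem_nth.
  have [[i Hi] _] := Hmeet _ HB.
  exists i; rewrite /psi (def_pblock Htriv HB Hi) index_uniq //; exact: enum_uniq.
have -> : e = [set pblock e (inl i) | i : 'I_n].
  apply/setP => B; apply/idP/imsetP => [HB | [i _ ->]]; last exact: Hin.
  have [[i Hi] _] := Hmeet B HB; exists i => //; by rewrite (def_pblock Htriv HB Hi).
by apply: leq_trans (leq_imset_card _ _) _; rewrite card_ord.
Qed.

Definition mrg (x y v : nat) : nat := if v == y then x else v.
Definition merge {n} (psi : 'I_n -> nat) (i j : 'I_n) : 'I_n -> nat :=
  fun k => mrg (psi i) (psi j) (psi k).

Lemma merge_step n (L : bp n -> bp n -> Prop) (HL : normal_congruence L)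
  (u f : bp n) psi phi (i j : 'I_n) :
  u = Lab2 psi psi -> f = Lab2 phi phi -> psi i != psi j -> phi i = phi j -> L u f ->
  L u (Lab2 (merge psi i j) (merge psi i j)).
Proof.
case: HL => [[HE [Hrefl [Hsym [Htrans Hcomp]]]] Hnorm].
move=> Hu Hf Hij Hphi Luf.
have Hneij : i != j by apply: contraNneq Hij => ->.
pose chi (k : 'I_n) := if k == j then val i else val k.
have Hq : in_E (Lab2 chi chi) := inE_Lab2 chi.
have [H1 _] := Hcomp _ _ _ Luf Hq.
have Hfq : bpmul f (Lab2 chi chi) = f.
  have Hb : forall k, phi k = phi (insubd j (chi k)).
    by move=> k; rewrite /chi; case: eqP => [->|_]; rewrite valKd.
  rewrite Hf (@mul_coarseL _ phi phi chi chi (fun v => phi (insubd j v)) Hb (img_refl _) (img_refl _)).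
  by apply: Lab2_ext => // k; rewrite -Hb.
pose mu := mrg (psi i) (psi j).
have Hbc : forall k, mu (psi k) = mu (psi (insubd j (chi k))).
  move=> k; rewrite /chi; case: eqP => [->|_]; rewrite valKd //.
  by rewrite /mu /mrg eqxx (negbTE Hij).
have Hmid : forall k k', mu (psi k) = mu (psi k') ->
    connect (prod_edge (Lab2 psi psi) (Lab2 chi chi)) (mid k) (mid k').
  have eL : forall k k', psi k = psi k' ->
      connect (prod_edge (Lab2 psi psi) (Lab2 chi chi)) (mid k) (mid k').
    by move=> k k' H; apply: connect1; apply: (@edgeL _ _ _ (inr k) (inr k')).
  have eR : forall k k', chi k = chi k' ->
      connect (prod_edge (Lab2 psi psi) (Lab2 chi chi)) (mid k) (mid k').
    by move=> k k' H; apply: connect1; apply: (@edgeR _ _ _ (inl k) (inl k')).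
  have cij : chi i = chi j by rewrite /chi eqxx (negbTE Hneij).
  move=> k k'; case: (psi k =P psi k') => [Heq _|Hne]; first exact: eL.
  rewrite /mu /mrg; case: (psi k =P psi j) => Hk; case: (psi k' =P psi j) => Hk' H.
  - by case: Hne; rewrite Hk Hk'.
  - apply: (connect_trans (eL _ _ Hk)); apply: (connect_trans (eR _ _ (esym cij))).
    exact: eL.
  - apply: (connect_trans (eL _ _ H)); apply: (connect_trans (eR _ _ cij)).
    exact: eL.
  - by case: Hne.
have Huq : bpmul u (Lab2 chi chi) = Lab2 (merge psi i j) (merge psi i j).
  rewrite Hu (@bpmul_Lab2 _ psi psi chi chi mu (fun v => mu (psi (insubd j v))) Hbc (img_refl _) (img_refl _) Hmid).
  by apply: Lab2_ext => // k; rewrite -Hbc.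
rewrite Huq Hfq in H1.
apply: Htrans Luf _; exact: Hsym.
Qed.

Definition tswap (x y v : nat) : nat := if v == x then y else if v == y then x else v.

Lemma tswapK x y v : tswap x y (tswap x y v) = v.
Proof.
rewrite /tswap.
have [->|H1] := eqVneq v x.
  by rewrite eqxx; case: (y =P x).
have [->|H2] := eqVneq v y; first by rewrite eqxx.
by rewrite (negbTE H1) (negbTE H2).
Qed.
Lemma tswap_lt x y v r : x < r -> y < r -> v < r -> tswap x y v < r.
Proof. by rewrite /tswap => *; do 2 case: ifP => _ //. Qed.

Lemma chain_step n (L : bp n -> bp n -> Prop) (HL : normal_congruence L)
  (u : bp n) psi (r : nat) (i j : 'I_n) m' :
  u = Lab2 psi psi -> (forall k, psi k < r) ->
  (forall v, v < r -> exists k, psi k = v) -> psi i != psi j ->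
  L u (Lab2 (merge psi i j) (merge psi i j)) -> m'.+2 <= r ->
  L (Lab2 (fun k => minn (psi k) m'.+1) (fun k => minn (psi k) m'.+1))
    (Lab2 (fun k => minn (psi k) m') (fun k => minn (psi k) m')).
Proof.
case: HL => [[HE [Hrefl [Hsym [Htrans Hcomp]]]] Hnorm].
move=> Hu Hlt Hsurj Hij Luu' Hm.
set a := psi i; set b := psi j.
pose s1 := tswap a m'. pose b1 := s1 b. pose s2 := tswap b1 m'.+1.
pose pi v := minn (s2 (s1 v)) m'.+1.
pose cap k := minn (psi k) m'.+1.
pose P k := pi (psi k).
have Hab : a != b by [].
have Fa : pi a = m'.
  have h1 : s1 a = m' by rewrite /s1 /tswap eqxx.
  have hb1 : b1 != m'.
    apply: contraNneq Hab => H; apply/eqP.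
    by rewrite -(tswapK a m' a) -(tswapK a m' b) -/s1 h1 -/b1 H.
  rewrite /pi h1 /s2 /tswap eq_sym (negbTE hb1).
  have -> : (m' == m'.+1) = false by apply/negbTE/eqP; lia.
  by apply/minn_idPl.
have Fb : pi b = m'.+1 by rewrite /pi -/b1 /s2 /tswap eqxx minnn.
have Fle : forall v, pi v <= m'.+1 by move=> v; exact: geq_minr.
have Fsurj : forall w, w <= m'.+1 -> exists k, P k = w.
  move=> w Hw.
  have Hv : s1 (s2 w) < r.
    have Har : a < r by apply: Hlt.
    have Hbr : b < r by apply: Hlt.
    have Hb1 : b1 < r by apply: tswap_lt => //; lia.
    by apply: tswap_lt => //; [lia | apply: tswap_lt => //; lia].
  have [k Hk] := Hsurj _ Hv; exists k.
  by rewrite /P /pi Hk /s1 tswapK /s2 tswapK; apply/minn_idPl.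
have Fcap : forall w, w <= m'.+1 -> exists k, cap k = w.
  move=> w Hw; have [k Hk] := Hsurj w (leq_ltn_trans Hw Hm).
  by exists k; rewrite /cap Hk; apply/minn_idPl.
have I1 : img cap P by move=> k; have [k' Hk'] := Fsurj (cap k) (geq_minr _ _); exists k'.
have I2 : img P cap by move=> k; have [k' Hk'] := Fcap (P k) (Fle _); exists k'.
have := Hnorm _ _ _ _ (Istar_Lab2 I2 I1) (inverse_Lab2 I2 I1) Luu'.
have T1 : bpmul (bpmul (Lab2 cap P) u) (Lab2 P cap) = Lab2 cap cap.
  rewrite Hu (@mul_coarseL _ cap P psi psi pi (fun _ => erefl) I1 (img_refl _)).
  exact: (mul_same I1 I1).
pose mu := merge psi i j.
have Hbc : forall k, minn (P k) m' = minn (pi (mu k)) m'.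
  move=> k; rewrite /mu /merge /mrg /P -/a -/b; case: eqP => [->|] //.
  by rewrite Fa Fb; lia.
have Pi : P i = m' by exact: Fa.
have Pj : P j = m'.+1 by exact: Fb.
have muij : mu i = mu j by rewrite /mu /merge /mrg eqxx; case: ifP.
have Hmid : forall k k', minn (P k) m' = minn (P k') m' ->
    connect (prod_edge (Lab2 cap P) (Lab2 mu mu)) (mid k) (mid k').
  have eL : forall k k', P k = P k' ->
      connect (prod_edge (Lab2 cap P) (Lab2 mu mu)) (mid k) (mid k').
    by move=> k k' H; apply: connect1; apply: (@edgeL _ _ _ (inr k) (inr k')).
  have eR : forall k k', mu k = mu k' ->
      connect (prod_edge (Lab2 cap P) (Lab2 mu mu)) (mid k) (mid k').
    by move=> k k' H; apply: connect1; apply: (@edgeR _ _ _ (inl k) (inl k')).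
  move=> k k'; case: (P k =P P k') => [Heq _|Hne H]; first exact: eL.
  have hk : P k <= m'.+1 := Fle _.
  have hk' : P k' <= m'.+1 := Fle _.
  have [[H1 H2]|[H1 H2]] : (P k = m' /\ P k' = m'.+1) \/ (P k = m'.+1 /\ P k' = m') by lia.
  - apply: (connect_trans (eL k i _)); first by rewrite H1 Pi.
    apply: (connect_trans (eR i j muij)); apply: eL; by rewrite Pj H2.
  - apply: (connect_trans (eL k j _)); first by rewrite H1 Pj.
    apply: (connect_trans (eR j i (esym muij))); apply: eL; by rewrite Pi H2.
have T2 : bpmul (bpmul (Lab2 cap P) (Lab2 mu mu)) (Lab2 P cap) =
    Lab2 (fun k => minn (cap k) m') (fun k => minn (cap k) m').
  rewrite (@bpmul_Lab2 _ cap P mu mu (fun v => minn v m') (fun v => minn (pi v) m') Hbc I1 (img_refl _) Hmid).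
  have I3 : img (fun k => minn (cap k) m') (fun k => minn (pi (mu k)) m').
    by move=> k; have [k' Hk'] := I1 k; exists k'; rewrite Hk' -Hbc.
  exact: (@mul_coarseL _ _ _ P cap (fun v => minn v m') (fun k => esym (Hbc k)) I3 I1).
rewrite T1 T2.
have -> : Lab2 (fun k => minn (cap k) m') (fun k => minn (cap k) m') =
          Lab2 (fun k => minn (psi k) m') (fun k => minn (psi k) m').
  by apply: Lab2_ext => k; rewrite /cap; lia.
by [].
Qed.

Definition zz {n} : bp n := Lab2 (fun _ : 'I_n => 0) (fun _ => 0).

Lemma to_z n (L : bp n -> bp n -> Prop) (HL : normal_congruence L)
  (u : bp n) psi (r : nat) (i j : 'I_n) :
  u = Lab2 psi psi -> (forall k, psi k < r) ->
  (forall v, v < r -> exists k, psi k = v) -> psi i != psi j ->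
  L u (Lab2 (merge psi i j) (merge psi i j)) -> L u zz.
Proof.
move=> Hu Hlt Hsurj Hij Luu'.
have HL' := HL; case: HL' => [[HE [Hrefl [Hsym [Htrans Hcomp]]]] Hnorm].
pose W m := Lab2 (fun k => minn (psi k) m) (fun k => minn (psi k) m).
have Hr : 2 <= r.
  have := Hlt i; have := Hlt j; move: Hij; case: eqP => // Hne _; lia.
have Step : forall m', m'.+2 <= r -> L (W m'.+1) (W m').
  by move=> m' Hm; apply: (chain_step HL Hu Hlt Hsurj Hij Luu' Hm).
have Ch : forall m', m' < r -> L (W m') (W 0).
  elim=> [_|m' IH Hm].
    have H10 := Step 0 Hr.
    exact: Htrans (Hsym _ _ H10) H10.
  exact: Htrans (Step m' Hm) (IH (ltnW Hm)).
have Hu' : u = W r.-1.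
  by rewrite Hu; apply: Lab2_ext => k; have := Hlt k; lia.
have Hz : W 0 = zz by apply: Lab2_ext => k; lia.
rewrite -Hz Hu'; apply: Ch; lia.
Qed.

Lemma conj_final n (L : bp n -> bp n -> Prop) (HL : normal_congruence L)
  (u : bp n) psi (r : nat) (g : bp n) phi (m : nat) :
  u = Lab2 psi psi -> (forall k, psi k < r) ->
  (forall v, v < r -> exists k, psi k = v) ->
  g = Lab2 phi phi -> (forall k, phi k < m) ->
  (forall v, v < m -> exists k, phi k = v) -> 1 <= m -> m <= r ->
  L u zz -> L g zz.
Proof.
move=> Hu Hlt Hsurj Hg Hlt' Hsurj' Hm1 Hmr Luz.
have HL' := HL; case: HL' => [[HE [Hrefl [Hsym [Htrans Hcomp]]]] Hnorm].
pose cap k := minn (psi k) m.-1.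
have I1 : img cap phi.
  move=> k; have [k' Hk'] : exists k', phi k' = cap k by apply: Hsurj'; rewrite /cap; lia.
  by exists k'.
have I2 : img phi cap.
  move=> k; have [k' Hk'] : exists k', psi k' = phi k by apply: Hsurj; have := Hlt' k; lia.
  exists k'; rewrite /cap Hk'; have := Hlt' k; lia.
have := Hnorm _ _ _ _ (Istar_Lab2 I1 I2) (inverse_Lab2 I1 I2) Luz.
have T1 : bpmul (bpmul (Lab2 phi cap) u) (Lab2 cap phi) = g.
  rewrite Hu (@mul_coarseL _ phi cap psi psi (fun v => minn v m.-1) (fun _ => erefl) I2 (img_refl _)).
  by rewrite Hg; exact: (mul_same I2 I2).
have T2 : bpmul (bpmul (Lab2 phi cap) zz) (Lab2 cap phi) = zz.
  rewrite /zz (@mul_coarseR _ phi cap (fun _ => 0) (fun _ => 0) (fun _ => 0) (fun _ => erefl) I2 (img_refl _)).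
  have E := (@mul_coarseL _ (fun _ => 0) (fun _ => 0) cap phi (fun _ => 0) (fun _ => erefl) (img_refl _) I2).
  exact: E.
by rewrite T1 T2.
Qed.

Lemma max_exists (P : nat -> Prop) N : (forall m, P m -> m <= N) -> (exists m, P m) ->
  exists m, P m /\ forall m', P m' -> m' <= m.
Proof.
elim: N => [|N IH] Hb [m Pm].
  by exists m; split => // m' /Hb; lia.
case: (classic (P N.+1)) => [HP|HnP].
  by exists N.+1; split => // m' /Hb.
apply: IH; last by exists m.
move=> m' Pm'; have := Hb _ Pm'; rewrite leq_eqVlt; case/orP => // /eqP E.
by rewrite E in Pm'.
Qed.

Theorem mainTheorem20 (n : nat) (L : bp n -> bp n -> Prop) :
  1 <= n -> normal_congruence L ->
  exists k : nat, 1 <= k <= n /\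
    (forall e f : bp n, L e f <->
       (in_E e /\ in_E f /\ (e = f \/ (rank e <= k /\ rank f <= k)))).
Proof.
move=> Hn HL.
have HL' := HL; case: HL' => [[HE [Hrefl [Hsym [Htrans Hcomp]]]] Hnorm].
have Hrank : forall e : bp n, in_E e -> 1 <= #|e| <= n.
  move=> e Ee; have [psi [_ [Hlt [_ Hle]]]] := E_char Ee.
  by rewrite Hle andbT; have := Hlt (Ordinal Hn); lia.
have Hz1 : forall e : bp n, in_E e -> #|e| <= 1 -> e = zz.
  move=> e Ee H1; have [psi [He [Hlt _]]] := E_char Ee; rewrite He.
  by apply: Lab2_ext => k; have := Hlt k; lia.
have Key : forall x y : bp n, L x y -> x <> y -> L x zz.
  move=> x y Lxy Hxy; have [Ex Ey] := HE _ _ Lxy.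
  have [psi [Hx [Hlt [Hsurj _]]]] := E_char Ex.
  have [phi [Hy [Hlt' [Hsurj' _]]]] := E_char Ey.
  have [i [j H]] : exists i j, (psi i == psi j) != (phi i == phi j).
    apply: NNPP => Hno; apply: Hxy; rewrite Hx Hy; apply: Lab_ext.
    have Hij : forall i j, (psi i == psi j) = (phi i == phi j).
      move=> i j; case: ((psi i == psi j) =P (phi i == phi j)) => // Hne.
      by exfalso; apply: Hno; exists i, j; apply/eqP.
    by case=> i; case=> j /=; apply: Hij.
  case: (eqVneq (psi i) (psi j)) H => Hp H.
  - have {}H : phi i != phi j by move: H; case: (phi i == phi j).
    have Lyx := Hsym _ _ Lxy.
    have Hq : psi i = psi j by exact: Hp.
    have := merge_step HL Hy Hx H Hq Lyx.
    move/(to_z HL Hy Hlt' Hsurj' H) => Lyz.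
    exact: Htrans Lxy Lyz.
  - have {}H : phi i == phi j by move: H; case: (phi i == phi j).
    have := merge_step HL Hx Hy Hp (eqP H) Lxy.
    exact: (to_z HL Hx Hlt Hsurj Hp).
have Final : forall x y : bp n, L x y -> x <> y -> forall g, in_E g -> #|g| <= #|x| -> L g zz.
  move=> x y Lxy Hxy g Eg Hgx.
  have Lxz := Key _ _ Lxy Hxy.
  have [Ex _] := HE _ _ Lxy.
  have [psi [Hx [Hlt [Hsurj _]]]] := E_char Ex.
  have [phi [Hg [Hlt' [Hsurj' _]]]] := E_char Eg.
  have := Hrank _ Eg; case/andP => Hg1 _.
  exact: (conj_final HL Hx Hlt Hsurj Hg Hlt' Hsurj' Hg1 Hgx Lxz).
pose Pm m := exists x y, L x y /\ x <> y /\ #|x| = m.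
case: (classic (exists m, Pm m)) => [Hex|Hnone].
  have Hb : forall m, Pm m -> m <= n.
    move=> m [x [y [Lxy [_ <-]]]]; have [Ex _] := HE _ _ Lxy.
    by case/andP: (Hrank _ Ex).
  have [k [[x [y [Lxy [Hxy Hk]]]] Hmax]] := max_exists Hb Hex.
  exists k; split.
    by have [Ex _] := HE _ _ Lxy; rewrite -Hk; apply: Hrank.
  move=> e f; split.
    move=> Lef; have [Ee Ef] := HE _ _ Lef; do 2 split => //.
    case: (eqVneq e f) => [->|Hne]; first by left.
    right; rewrite /rank; split; apply: Hmax.
      by exists e, f; split => //; split => //; apply/eqP.
    by exists f, e; split; [exact: Hsym | split => //; apply/eqP; rewrite eq_sym].
  case=> Ee [Ef [->|[He Hf]]]; first exact: Hrefl.
  rewrite /rank -Hk in He Hf.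
  have Lez := Final _ _ Lxy Hxy _ Ee He.
  have Lfz := Final _ _ Lxy Hxy _ Ef Hf.
  exact: Htrans Lez (Hsym _ _ Lfz).
exists 1; split; first by rewrite leqnn Hn.
move=> e f; split.
  move=> Lef; have [Ee Ef] := HE _ _ Lef; do 2 split => //; left.
  case: (eqVneq e f) => // Hne; exfalso; apply: Hnone.
  by exists #|e|, e, f; split => //; split => //; apply/eqP.
case=> Ee [Ef [->|[He Hf]]]; first exact: Hrefl.
rewrite (Hz1 e Ee He) (Hz1 f Ef Hf); apply: Hrefl; exact: inE_Lab2.
Qed.
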